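(* Let $n\ge1$ and let $R=\mathbb{C}[x_{ij}: i\ne j,\ i,j\in[1,n+1]]$. Let $X$ be the $(n+1)\times(n+1)$ matrix with off-diagonal entries $x_{ij}$ and zero diagonal. Then the set of $2\times2$ minors of $X$ is a Gröbner basis of the ideal it generates with respect to the degree reverse lexicographic order induced by any total order of the variables.
   Context: Degree revlex order (for variables ordered $x_1>\dots>x_N$): $x^a>x^b$ if $\sum a_i>\sum b_i$, or the degrees are equal and the rightmost nonzero entry of $a-b$ is negative. *)

(* Defs.v *)
From HB Require Import structures.
From mathcomp Require Import all_boot all_order all_algebra all_field.
From mathcomp Require Import mpoly.
Set Implicit Arguments. Unset Strict Implicit. Unset Printing Implicit Defensive.
Import Order.TTheory GRing.Theory Num.Theory.
Local Open Scope ring_scope.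

(* Polynomial ring C[x_0,...,x_{N-1}] with variable order x_0 > x_1 > ... > x_{N-1}. *)

Definition drl_gt (N : nat) (a b : 'X_{1..N}) : Prop :=
  (mdeg b < mdeg a)%N \/
  (mdeg a = mdeg b /\
   exists i : 'I_N, (a i < b i)%N /\ forall j : 'I_N, (i < j)%N -> a j = b j).

Definition is_lead_mon (R : ringType) (N : nat) (p : {mpoly R[N]}) (m : 'X_{1..N}) : Prop :=
  m \in msupp p /\ forall m' : 'X_{1..N}, m' \in msupp p -> m' != m -> drl_gt m m'.

Definition mon_dvd (N : nat) (a b : 'X_{1..N}) : Prop := forall i : 'I_N, (a i <= b i)%N.

Definition in_ideal (R : comRingType) (N : nat) (S : {mpoly R[N]} -> Prop)
  (f : {mpoly R[N]}) : Prop :=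
  exists s : seq ({mpoly R[N]} * {mpoly R[N]}),
    (forall x, x \in s -> S x.2) /\ f = \sum_(x <- s) x.1 * x.2.

Definition groebner_drl (R : comRingType) (N : nat) (G : {mpoly R[N]} -> Prop) : Prop :=
  forall f : {mpoly R[N]}, in_ideal G f -> f != 0 ->
    exists g : {mpoly R[N]}, [/\ G g, g != 0 &
      exists mf mg, [/\ is_lead_mon f mf, is_lead_mon g mg & mon_dvd mg mf]].

Definition Xmat (n N : nat) (sigma : 'I_n.+1 -> 'I_n.+1 -> 'I_N) :
  'M[{mpoly algC[N]}]_n.+1 :=
  \matrix_(i, j) (if i == j then 0 else 'X_(sigma i j)).

Definition minors2 (R : comRingType) (m : nat) (A : 'M[R]_m) : R -> Prop :=
  fun p => exists i1 i2 j1 j2 : 'I_m, [/\ (i1 < i2)%N, (j1 < j2)%N &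
    p = A i1 j1 * A i2 j2 - A i1 j2 * A i2 j1].

(* Main.v *)
Require Import Defs.
From HB Require Import structures.
From mathcomp Require Import all_boot all_order all_algebra all_field.
From mathcomp Require Import mpoly.
Set Implicit Arguments. Unset Strict Implicit. Unset Printing Implicit Defensive.
Import Order.TTheory GRing.Theory Num.Theory.
Local Open Scope ring_scope.
Definition phi (N : nat) (P : pred 'X_{1..N}) (p : {mpoly algC[N]}) : algC :=
  \sum_(m <- msupp p | P m) p@_m.

Lemma phi_sup N (P : pred 'X_{1..N}) p (s : seq 'X_{1..N}) :
  uniq s -> {subset msupp p <= s} -> phi P p = \sum_(m <- s | P m) p@_m.
Proof.
move=> us sub; rewrite /phi [RHS](bigID (mem (msupp p))) /=.
rewrite [X in _ = _ + X]big1 ?addr0; last by move=> m /andP[_ /memN_msupp_eq0].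
rewrite -big_filter -[RHS]big_filter; apply: perm_big.
apply: uniq_perm; rewrite ?filter_uniq ?msupp_uniq //.
move=> m; rewrite !mem_filter; case: (P m) => //=.
by case H: (m \in msupp p) => //=; rewrite sub.
Qed.

Lemma phiD N (P : pred 'X_{1..N}) p q : phi P (p + q) = phi P p + phi P q.
Proof.
set s := undup (msupp p ++ msupp q ++ msupp (p + q)).
have us : uniq s by apply: undup_uniq.
rewrite (@phi_sup _ _ _ s) ?(@phi_sup _ _ p s) ?(@phi_sup _ _ q s) //;
  try by move=> m hm; rewrite mem_undup !mem_cat hm ?orbT.
by rewrite -big_split /=; apply: eq_bigr => m _; rewrite mcoeffD.
Qed.

Lemma phi0 N (P : pred 'X_{1..N}) : phi P 0 = 0.
Proof. by rewrite /phi msupp0 big_nil. Qed.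

Lemma phiN N (P : pred 'X_{1..N}) p : phi P (- p) = - phi P p.
Proof. by apply/eqP; rewrite -subr_eq0 opprK -phiD addNr phi0. Qed.

Lemma phiB N (P : pred 'X_{1..N}) p q : phi P (p - q) = phi P p - phi P q.
Proof. by rewrite phiD phiN. Qed.

Lemma phi_sum N (P : pred 'X_{1..N}) I (r : seq I) (F : I -> {mpoly algC[N]}) :
  phi P (\sum_(x <- r) F x) = \sum_(x <- r) phi P (F x).
Proof.
elim: r => [|x r IH]; first by rewrite !big_nil phi0.
by rewrite !big_cons phiD IH.
Qed.

Lemma phiMX N (P : pred 'X_{1..N}) h W :
  phi P (h * 'X_[W]) = \sum_(m <- msupp h | P (W + m)%MM) h@_m.
Proof.
rewrite /phi (perm_big _ (msuppMX h W)) big_map.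
by apply: eq_bigr => m _; rewrite mcoeffMX.
Qed.
Lemma drl_trans N (a b c : 'X_{1..N}) : drl_gt a b -> drl_gt b c -> drl_gt a c.
Proof.
case=> [ab|[dab [i [hi1 hi2]]]]; case=> [bc|[dbc [j [hj1 hj2]]]].
- by left; apply: ltn_trans ab.
- by left; rewrite -dbc.
- by left; rewrite dab.
right; split; first by rewrite dab.
case: (ltngtP i j) => [ij|ji|/val_inj eij].
- exists j; split; first by rewrite hi2.
  by move=> k jk; rewrite hi2 ?hj2 //; apply: ltn_trans jk.
- exists i; split; first by rewrite -hj2.
  by move=> k ik; rewrite hi2 ?hj2 //; apply: ltn_trans ik.
- subst j; exists i; split; first by apply: ltn_trans hj1.
  by move=> k ik; rewrite hi2 ?hj2.
Qed.

Lemma drl_total N (a b : 'X_{1..N}) : a != b -> drl_gt a b \/ drl_gt b a.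
Proof.
move=> nab.
case: (ltngtP (mdeg a) (mdeg b)) => [ab|ba|dab]; [by right; left|by left; left|].
have [i0 hi0] : exists i, a i != b i.
  apply/existsP; apply: contraR nab => /existsPn H.
  by apply/eqP/mnmP => i; apply/eqP; move: (H i); rewrite negbK.
case: (@arg_maxnP _ i0 (fun i => a i != b i) val hi0) => i hi imax.
have hup : forall j : 'I_N, (i < j)%N -> a j = b j.
  move=> j ij; apply/eqP; apply: contraTT ij => hj.
  by rewrite -leqNgt; apply: imax.
case: (ltngtP (a i) (b i)) => [h|h|h]; last by rewrite h eqxx in hi.
- by left; right; split=> //; exists i.
- by right; right; split=> //; exists i; split=> // j /hup.
Qed.

Lemma drl_max N (s : seq 'X_{1..N}) : s != [::] ->
  exists m, m \in s /\ forall m', m' \in s -> m' != m -> drl_gt m m'.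
Proof.
elim: s => [//|x t IH] _.
case: (altP (t =P [::])) => [->|tnil].
  by exists x; split; rewrite ?mem_seq1 // => m'; rewrite mem_seq1 => ->.
have [m [mt mmax]] := IH tnil.
case: (altP (x =P m)) => [->|nxm].
  exists m; split; first by rewrite inE eqxx.
  by move=> m'; rewrite inE => /orP[/eqP->|/mmax]; [rewrite eqxx|].
case: (drl_total nxm) => [xm|mx].
- exists x; split; first by rewrite inE eqxx.
  move=> m'; rewrite inE => /orP[/eqP->|m't]; first by rewrite eqxx.
  move=> _; case: (altP (m' =P m)) => [->//|nm'm].
  by apply: drl_trans xm (mmax _ m't nm'm).
- exists m; split; first by rewrite inE mt orbT.
  by move=> m'; rewrite inE => /orP[/eqP->|/mmax] //.
Qed.
Definition sinj n N (sigma : 'I_n.+1 -> 'I_n.+1 -> 'I_N) :=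
  forall i j k l, i != j -> k != l -> sigma i j = sigma k l -> i = k /\ j = l.

Definition tl n N (sigma : 'I_n.+1 -> 'I_n.+1 -> 'I_N) a (m : 'X_{1..N}) : nat :=
  (\sum_(b < n.+1 | b != a) m (sigma a b))%N.
Definition hd n N (sigma : 'I_n.+1 -> 'I_n.+1 -> 'I_N) a (m : 'X_{1..N}) : nat :=
  (\sum_(b < n.+1 | b != a) m (sigma b a))%N.
Definition inim n N (sigma : 'I_n.+1 -> 'I_n.+1 -> 'I_N) (p : 'I_N) : bool :=
  [exists i, [exists j, (i != j) && (sigma i j == p)]].
Definition cls n N (sigma : 'I_n.+1 -> 'I_n.+1 -> 'I_N) (mf m : 'X_{1..N}) : bool :=
  [&& mdeg m == mdeg mf, [forall a, tl sigma a m == tl sigma a mf],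
      [forall a, hd sigma a m == hd sigma a mf] &
      [forall p, ~~ inim sigma p ==> (m p == mf p)]].

Lemma tlD n N (sigma : 'I_n.+1 -> 'I_n.+1 -> 'I_N) a m1 m2 :
  tl sigma a (m1 + m2)%MM = (tl sigma a m1 + tl sigma a m2)%N.
Proof. by rewrite /tl -big_split; apply: eq_bigr => b _; rewrite mnmDE. Qed.

Lemma hdD n N (sigma : 'I_n.+1 -> 'I_n.+1 -> 'I_N) a m1 m2 :
  hd sigma a (m1 + m2)%MM = (hd sigma a m1 + hd sigma a m2)%N.
Proof. by rewrite /hd -big_split; apply: eq_bigr => b _; rewrite mnmDE. Qed.

Lemma tlU n N (sigma : 'I_n.+1 -> 'I_n.+1 -> 'I_N) (hs : sinj sigma) a i j :
  i != j -> tl sigma a U_(sigma i j)%MM = (a == i).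
Proof.
move=> nij; rewrite /tl.
case: (altP (a =P i)) => [->|nai].
  rewrite (bigD1 j) /=; last by rewrite eq_sym.
  rewrite mnm1E eqxx big1 // => b /andP[nbi nbj]; rewrite mnm1E; apply/eqP; rewrite eqb0.
  have nib : i != b by rewrite eq_sym.
  apply/eqP => E; have [_ E2] := hs _ _ _ _ nij nib E.
  by rewrite E2 eqxx in nbj.
apply: big1 => b nba; rewrite mnm1E; apply/eqP; rewrite eqb0.
have nab : a != b by rewrite eq_sym.
apply/eqP => E; have [E2 _] := hs _ _ _ _ nij nab E.
by rewrite E2 eqxx in nai.
Qed.

Lemma hdU n N (sigma : 'I_n.+1 -> 'I_n.+1 -> 'I_N) (hs : sinj sigma) a i j :
  i != j -> hd sigma a U_(sigma i j)%MM = (a == j).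
Proof.
move=> nij; rewrite /hd.
case: (altP (a =P j)) => [->|naj].
  rewrite (bigD1 i) /=; last done.
  rewrite mnm1E eqxx big1 //.
  move=> b /andP[nbj nbi]; rewrite mnm1E; apply/eqP; rewrite eqb0.
  apply/eqP => E; have [E2 _] := hs _ _ _ _ nij nbj E.
  by rewrite E2 eqxx in nbi.
apply: big1 => b nba; rewrite mnm1E; apply/eqP; rewrite eqb0.
apply/eqP => E; have [_ E2] := hs _ _ _ _ nij nba E.
by rewrite E2 eqxx in naj.
Qed.

Lemma inimU n N (sigma : 'I_n.+1 -> 'I_n.+1 -> 'I_N) p i j :
  i != j -> ~~ inim sigma p -> U_(sigma i j)%MM p = 0%N.
Proof.
move=> nij; apply: contraNeq; rewrite mnm1E eqb0 negbK => /eqP <-.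
by apply/existsP; exists i; apply/existsP; exists j; rewrite nij eqxx.
Qed.

Lemma cls_congr n N (sigma : 'I_n.+1 -> 'I_n.+1 -> 'I_N) mf m1 m2 :
  mdeg m1 = mdeg m2 -> (forall a, tl sigma a m1 = tl sigma a m2) ->
  (forall a, hd sigma a m1 = hd sigma a m2) ->
  (forall p, ~~ inim sigma p -> m1 p = m2 p) -> cls sigma mf m1 = cls sigma mf m2.
Proof.
move=> d t h o; rewrite /cls d.
congr [&& _, _, _ & _]; apply: eq_forallb => x.
- by rewrite t.
- by rewrite h.
- by case: (boolP (inim sigma x)) => //= H; rewrite o.
Qed.

Lemma sum_pos (I : eqType) (r : seq I) (P : pred I) (F : I -> nat) :
  (0 < \sum_(i <- r | P i) F i)%N -> exists2 i, P i & (0 < F i)%N.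
Proof.
move=> H; case: (boolP (has (fun i => P i && (0 < F i)%N) r)).
  by case/hasP => i _ /andP[] Pi Fi; exists i.
move/hasPn => H2; move: H; rewrite big1_seq // => i /andP[Pi ir].
by move: (H2 i ir); rewrite Pi /= -eqn0Ngt => /eqP.
Qed.

Definition good n N (sigma : 'I_n.+1 -> 'I_n.+1 -> 'I_N) (mf : 'X_{1..N}) :=
  forall a b c, b != a -> a != c -> (0 < mf (sigma b a))%N -> (0 < mf (sigma a c))%N -> False.

Definition pat n N (sigma : 'I_n.+1 -> 'I_n.+1 -> 'I_N) (mf : 'X_{1..N}) i j k l :=
  [&& i != j, k != l, i != l, k != j, i != k, j != l, (0 < mf (sigma i j))%N,
      (0 < mf (sigma k l))%N, (sigma i j < sigma i l)%N & (sigma k l < sigma i l)%N].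

Lemma cls_refl n N (sigma : 'I_n.+1 -> 'I_n.+1 -> 'I_N) mf : cls sigma mf mf.
Proof.
by rewrite /cls eqxx /=; apply/and3P; split; apply/forallP => x //; rewrite eqxx implybT.
Qed.

Lemma cls_swap n N (sigma : 'I_n.+1 -> 'I_n.+1 -> 'I_N) (hs : sinj sigma) mf m i j k l :
  i != j -> k != l -> i != l -> k != j ->
  cls sigma mf (U_(sigma i j) + U_(sigma k l) + m)%MM =
  cls sigma mf (U_(sigma i l) + U_(sigma k j) + m)%MM.
Proof.
move=> nij nkl nil nkj; apply: cls_congr.
- by rewrite !mdegD !mdeg1.
- by move=> a; rewrite !tlD !tlU.
- by move=> a; rewrite !hdD !hdU // [((a == j) + _)%N]addnC.
- by move=> p hp; rewrite !mnmDE !inimU.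
Qed.

Lemma cls_path n N (sigma : 'I_n.+1 -> 'I_n.+1 -> 'I_N) (hs : sinj sigma) mf m x y z :
  good sigma mf -> x != y -> y != z ->
  cls sigma mf (U_(sigma x y) + U_(sigma y z) + m)%MM = false.
Proof.
move=> gd nxy nyz; apply/negP => /and4P[_ /forallP T /forallP H _].
have t := eqP (T y); have h := eqP (H y).
rewrite !tlD !tlU // eqxx in t; rewrite !hdD !hdU // eqxx in h.
have t1 : (0 < tl sigma y mf)%N by rewrite -t addnC addnA addn1.
have h1 : (0 < hd sigma y mf)%N by rewrite -h.
have [b nby hb] := sum_pos t1; have [c ncy hc] := sum_pos h1.
by apply: (gd y c b) => //; rewrite eq_sym.
Qed.

Lemma sum_lt (I : finType) (P : pred I) (F G : I -> nat) l : P l ->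
  (\sum_(i | P i) F i = \sum_(i | P i) G i)%N -> (F l < G l)%N ->
  exists j, [/\ P j, j != l & (G j < F j)%N].
Proof.
move=> Pl E lt; case: (boolP [exists j, [&& P j, j != l & (G j < F j)%N]]).
  by case/existsP => j /and3P[]; exists j.
move/existsPn => H; exfalso; move: E; rewrite (bigD1 l) //= [X in _ = X](bigD1 l) //=.
move=> E; have : (F l + \sum_(i | P i && (i != l)) F i < G l + \sum_(i | P i && (i != l)) G i)%N.
  rewrite -addSn leq_add //; apply: leq_sum => i /andP[Pi nil].
  by move: (H i); rewrite Pi nil /= -leqNgt.
by rewrite E ltnn.
Qed.

Lemma pattern n N (sigma : 'I_n.+1 -> 'I_n.+1 -> 'I_N) (hs : sinj sigma) mf m :
  good sigma mf -> cls sigma mf m -> drl_gt mf m ->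
  exists i j k l, pat sigma mf i j k l.
Proof.
move=> gd /and4P[/eqP dm /forallP T /forallP H /forallP O].
case=> [|[_ [p [hp hup]]]]; first by rewrite dm ltnn.
have : inim sigma p.
  apply: contraLR hp => np; move: (O p); rewrite np /= => /eqP ->.
  by rewrite ltnn.
case/existsP => i /existsP [l /andP[nil /eqP ep]].
have [j [nji njl hj]] := sum_lt (P := fun b => b != i) (F := fun b => mf (sigma i b))
   (G := fun b => m (sigma i b)) (l := l) ltac:(by rewrite /= eq_sym) (esym (eqP (T i))) ltac:(by rewrite /= ep).
have [k [nkl nki hk]] := sum_lt (P := fun b => b != l) (F := fun b => mf (sigma b l))
   (G := fun b => m (sigma b l)) (l := i) nil (esym (eqP (H l))) ltac:(by rewrite /= ep).
have nij : i != j by rewrite eq_sym.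
have nik : i != k by rewrite eq_sym.
have hj0 : (0 < mf (sigma i j))%N by apply: leq_ltn_trans hj.
have hk0 : (0 < mf (sigma k l))%N by apply: leq_ltn_trans hk.
have njk : j != k.
  by apply/eqP => ejk; subst k; apply: (gd j i l).
have sj : (sigma i j < sigma i l)%N.
  case: (ltngtP (sigma i j) (sigma i l)) => // [lt|/val_inj E].
    by move: hj; rewrite hup ?ltnn // -ep.
  by have [_ E2] := hs _ _ _ _ nij nil E; rewrite E2 eqxx in njl.
have sk : (sigma k l < sigma i l)%N.
  case: (ltngtP (sigma k l) (sigma i l)) => // [lt|/val_inj E].
    by move: hk; rewrite hup ?ltnn // -ep.
  by have [E2 _] := hs _ _ _ _ nkl nil E; rewrite E2 eqxx in nki.
exists i, j, k, l; rewrite /pat nij nkl nil nik njl hj0 hk0 sj sk (eq_sym k j) njk.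
done.
Qed.

Lemma XmatE n N (sigma : 'I_n.+1 -> 'I_n.+1 -> 'I_N) i j :
  Xmat sigma i j = if i == j then 0 else 'X_(sigma i j).
Proof. by rewrite /Xmat mxE. Qed.

Lemma minor_ex n N (sigma : 'I_n.+1 -> 'I_n.+1 -> 'I_N) i k j l :
  i != k -> j != l ->
  exists g, minors2 (Xmat sigma) g /\
   (g = Xmat sigma i j * Xmat sigma k l - Xmat sigma i l * Xmat sigma k j \/
    g = - (Xmat sigma i j * Xmat sigma k l - Xmat sigma i l * Xmat sigma k j)).
Proof.
set X := Xmat sigma => nik njl.
case: (ltngtP i k) => [ik|ki|/val_inj E]; last by rewrite E eqxx in nik.
- case: (ltngtP j l) => [jl|lj|/val_inj E]; last by rewrite E eqxx in njl.
  + by eexists; split; [exists i, k, j, l; split; [exact ik|exact jl|reflexivity]|left].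
  + eexists; split; [exists i, k, l, j; split; [exact ik|exact lj|reflexivity]|right].
    by rewrite opprB.
- case: (ltngtP j l) => [jl|lj|/val_inj E]; last by rewrite E eqxx in njl.
  + eexists; split; [exists k, i, j, l; split; [exact ki|exact jl|reflexivity]|right].
    by rewrite opprB [X k j * _]mulrC [X k l * _]mulrC.
  + eexists; split; [exists k, i, l, j; split; [exact ki|exact lj|reflexivity]|left].
    by rewrite [X k l * _]mulrC [X k j * _]mulrC.
Qed.

Lemma phi_term n N (sigma : 'I_n.+1 -> 'I_n.+1 -> 'I_N) (hs : sinj sigma) mf h r c r' c' :
  good sigma mf -> [|| r == c, r' == c', c == r' | r == c'] ->
  phi (cls sigma mf) (h * (Xmat sigma r c * Xmat sigma r' c')) = 0.
Proof.
move=> gd H; rewrite !XmatE.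
case: (altP (r =P c)) => [_|nrc]; first by rewrite mul0r mulr0 phi0.
case: (altP (r' =P c')) => [_|nrc']; first by rewrite mulr0 mulr0 phi0.
rewrite -mpolyXD phiMX big_pred0 // => m.
move: H; rewrite (negbTE nrc) (negbTE nrc') /= => /orP[/eqP E|/eqP E].
  by subst r'; apply: cls_path.
by subst c'; rewrite [(U_(sigma r c) + _)%MM]addmC; apply: cls_path; rewrite // eq_sym.
Qed.

Lemma phi_swap n N (sigma : 'I_n.+1 -> 'I_n.+1 -> 'I_N) (hs : sinj sigma) mf h i j k l :
  i != j -> k != l -> i != l -> k != j ->
  phi (cls sigma mf) (h * (Xmat sigma i j * Xmat sigma k l)) =
  phi (cls sigma mf) (h * (Xmat sigma i l * Xmat sigma k j)).
Proof.
move=> nij nkl nil nkj; rewrite !XmatE (negbTE nij) (negbTE nkl) (negbTE nil) (negbTE nkj).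
rewrite -!mpolyXD !phiMX; apply: eq_bigl => m; exact: cls_swap.
Qed.

Lemma phi_minor n N (sigma : 'I_n.+1 -> 'I_n.+1 -> 'I_N) (hs : sinj sigma) mf h g :
  good sigma mf -> minors2 (Xmat sigma) g -> phi (cls sigma mf) (h * g) = 0.
Proof.
move=> gd [i1 [i2 [j1 [j2 [_ _ ->]]]]]; rewrite mulrBr phiB.
case: (boolP [&& i1 != j1, i2 != j2, i1 != j2 & i2 != j1]).
  by case/and4P => a b c d; rewrite (phi_swap hs) // subrr.
rewrite !negb_and !negbK => H.
rewrite !phi_term // ?subrr //.
  by move: H; rewrite (eq_sym j2 i2); case/or4P => ->; rewrite ?orbT.
by move: H; rewrite (eq_sym j1 i2); case/or4P => ->; rewrite ?orbT.
Qed.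

Lemma lead_N N (p : {mpoly algC[N]}) m : is_lead_mon p m -> is_lead_mon (- p) m.
Proof.
case=> h1 h2; split; first by rewrite mcoeff_msupp mcoeffN oppr_eq0 -mcoeff_msupp.
by move=> m'; rewrite mcoeff_msupp mcoeffN oppr_eq0 -mcoeff_msupp; apply: h2.
Qed.

Lemma lead_X N (A : 'X_{1..N}) : is_lead_mon ('X_[A] : {mpoly algC[N]}) A.
Proof.
split; first by rewrite msuppX mem_seq1.
by move=> m'; rewrite msuppX mem_seq1 => ->.
Qed.

Lemma lead_bin N (A B : 'X_{1..N}) : A != B -> drl_gt A B ->
  is_lead_mon ('X_[A] - 'X_[B] : {mpoly algC[N]}) A.
Proof.
move=> nAB dAB; split.
  by rewrite mcoeff_msupp mcoeffB !mcoeffX eqxx (eq_sym B A) (negbTE nAB) subr0 oner_eq0.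
move=> m'; rewrite mcoeff_msupp mcoeffB !mcoeffX => H nm'.
case: (altP (B =P m')) => [<-//|nB]; move: H.
by rewrite (negbTE nB) (eq_sym A m') (negbTE nm') subrr eqxx.
Qed.

Lemma lead_nz N (p : {mpoly algC[N]}) m : is_lead_mon p m -> p != 0.
Proof. by case=> h _; apply: contraTneq h => ->; rewrite msupp0. Qed.

Lemma dvd2 N (u v : 'I_N) (mf : 'X_{1..N}) : u != v -> (0 < mf u)%N -> (0 < mf v)%N ->
  mon_dvd (U_(u) + U_(v))%MM mf.
Proof.
move=> nuv hu hv q; rewrite mnmDE !mnm1E.
case: (altP (u =P q)) => [E|nuq].
  by subst q; rewrite (eq_sym v u) (negbTE nuv) addn0.
by case: (altP (v =P q)) => [E|]; [subst q|].
Qed.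

Lemma drl_neq N (A B : 'X_{1..N}) : drl_gt A B -> A != B.
Proof.
case=> [h|[_ [i [h _]]]]; apply/eqP => E; subst B; by rewrite ltnn in h.
Qed.

Lemma ne_lt N (x y : 'I_N) : (x < y)%N -> (x == y) = false.
Proof. by move=> h; apply/negbTE; apply: contraTneq h => ->; rewrite ltnn. Qed.

Lemma drl_bin n N (sigma : 'I_n.+1 -> 'I_n.+1 -> 'I_N) i j k l :
  (sigma i j < sigma i l)%N -> (sigma k l < sigma i l)%N ->
  drl_gt (U_(sigma i j) + U_(sigma k l))%MM (U_(sigma i l) + U_(sigma k j))%MM.
Proof.
move=> h1 h2; right; split; first by rewrite !mdegD !mdeg1.
have [p [p1 p2 p3]] : exists p : 'I_N, [/\ (sigma i l <= p)%N, (sigma k j <= p)%N &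
   (p == sigma i l) || (p == sigma k j)].
  case: (ltnP (sigma i l) (sigma k j)) => h.
    by exists (sigma k j); rewrite eqxx orbT leqnn ltnW.
  by exists (sigma i l); rewrite eqxx leqnn.
exists p; split.
  rewrite !mnmDE !mnm1E (ne_lt (leq_trans h1 p1)) (ne_lt (leq_trans h2 p1)).
  by case/orP: p3 => /eqP ->; rewrite eqxx ?addn1 ?add1n.
move=> q pq; rewrite !mnmDE !mnm1E !ne_lt //.
- exact: leq_ltn_trans p2 pq.
- exact: leq_ltn_trans p1 pq.
- by apply: ltn_trans h2 (leq_ltn_trans p1 pq).
- by apply: ltn_trans h1 (leq_ltn_trans p1 pq).
Qed.

Unset Implicit Arguments.
Theorem corollary6p1 (n : nat) (hn : (1 <= n)%N)
  (sigma : 'I_n.+1 -> 'I_n.+1 -> 'I_(n.+1 * n))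
  (hsig : forall i j k l, i != j -> k != l -> sigma i j = sigma k l -> i = k /\ j = l) :
  groebner_drl (minors2 (Xmat sigma)).
Proof.
have hs : sinj sigma by [].
move=> f [s [hS fe]] fnz.
have [mf [mfs mfmax]] : exists m, m \in msupp f /\
    forall m', m' \in msupp f -> m' != m -> drl_gt m m'.
  by apply: drl_max; rewrite msupp_eq0.
have lf : is_lead_mon f mf by split.
case: (boolP [exists a, exists b, exists c,
   [&& b != a, a != c, (0 < mf (sigma b a))%N & (0 < mf (sigma a c))%N]]).
  case/existsP => a /existsP [b /existsP [c /and4P [nba nac hba hac]]].
  have nab : a != b by rewrite eq_sym.
  have [g [gm gE]] := minor_ex sigma nab nac.
  have hM : Xmat sigma a a * Xmat sigma b c - Xmat sigma a c * Xmat sigma b a =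
     - 'X_[U_(sigma a c) + U_(sigma b a)].
    by rewrite !XmatE eqxx (negbTE nac) (negbTE nba) mul0r sub0r mpolyXD.
  rewrite hM in gE.
  have lg : is_lead_mon g (U_(sigma a c) + U_(sigma b a))%MM.
    by case: gE => ->; rewrite ?opprK; [apply: lead_N|]; apply: lead_X.
  exists g; split=> //; first exact: lead_nz lg.
  exists mf, (U_(sigma a c) + U_(sigma b a))%MM; split=> //.
  apply: dvd2 => //; apply/eqP => /hsig [] // E _; by rewrite E eqxx in nab.
move/existsPn => H0.
have gd : good sigma mf.
  move=> a b c nba nac hba hac; move: (H0 a) => /existsPn /(_ b) /existsPn /(_ c).
  by rewrite nba nac hba hac.
case: (boolP [exists i, exists j, exists k, exists l, pat sigma mf i j k l]).
  case/existsP => i /existsP [j /existsP [k /existsP [l P]]].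
  have P' := P; move: P'; rewrite /pat => /and5P[nij nkl nil nkj /and5P[nik njl hij hkl /andP[sij skl]]].
  have [g [gm gE]] := minor_ex sigma nik njl.
  have hM : Xmat sigma i j * Xmat sigma k l - Xmat sigma i l * Xmat sigma k j =
     'X_[U_(sigma i j) + U_(sigma k l)] - 'X_[U_(sigma i l) + U_(sigma k j)].
    by rewrite !XmatE (negbTE nij) (negbTE nkl) (negbTE nil) (negbTE nkj) !mpolyXD.
  rewrite hM in gE.
  have dg := drl_bin sij skl.
  have lg : is_lead_mon g (U_(sigma i j) + U_(sigma k l))%MM.
    by case: gE => ->; [|apply: lead_N]; apply: lead_bin => //; apply: drl_neq.
  exists g; split=> //; first exact: lead_nz lg.
  exists mf, (U_(sigma i j) + U_(sigma k l))%MM; split=> //.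
  apply: dvd2 => //; apply/eqP => /hsig [] // E _; by rewrite E eqxx in nik.
move/existsPn => H1; exfalso.
have phi0f : phi (cls sigma mf) f = 0.
  rewrite fe phi_sum big1_seq // => x /andP[_ xs].
  exact: phi_minor (hS x xs).
have phif : phi (cls sigma mf) f = f@_mf.
  rewrite /phi big_seq_cond.
  rewrite (eq_bigl (fun m => (m \in msupp f) && (m == mf))); last first.
    move=> m /=; case: (boolP (m \in msupp f)) => //= hm.
    case: (altP (m =P mf)) => [->|nm]; first exact: cls_refl.
    apply/negP => cm; have [i [j [k [l P]]]] := pattern hs gd cm (mfmax m hm nm).
    by move: (H1 i) => /existsPn /(_ j) /existsPn /(_ k) /existsPn /(_ l); rewrite P.
  rewrite -big_seq_cond -big_filter.
  have -> : [seq m <- msupp f | m == mf] = [:: mf] by apply: filter_pred1_uniq; rewrite ?msupp_uniq.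
  by rewrite big_seq1.
by move: mfs; rewrite mcoeff_msupp -phif phi0f eqxx.
Qed.
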